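(* Let $\mathbf{Ring}$ be the category of (commutative) unital rings, $\mathbf{Digraph}$ the category of digraphs with regular morphisms, and $\mathbf{Ab}^{\mathrm{gr}}$ the category of graded abelian groups. Then multipath cohomology with constant coefficients \[\mathrm{H}_\mu(-;-)\colon \mathbf{Digraph}^{\mathrm{op}}\times\mathbf{Ring}\to\mathbf{Ab}^{\mathrm{gr}},\qquad({\tt G},R)\mapsto \mathrm{H}^*_\mu({\tt G};R)=\mathrm{H}^*_\mu({\tt G};R,R),\] is a bifunctor.
   Context: A digraph ${\tt G}=(V,E)$ has a finite vertex set $V$ and edge set $E\subseteq (V\times V)\setminus\{(v,v)\}$; a regular morphism is an injective vertex map sending edges to edges. A multipath of ${\tt G}$ is a spanning subgraph (all vertices, a subset of the edges) each of whose connected components (of the underlying undirected graph) is a single vertex or a simple directed path (edges $e_1,\dots,e_k$ with target of $e_i$ equal to source of $e_{i+1}$, no repeated vertex, not a cycle). $P({\tt G})$ is the set of multipaths ordered by inclusion of edge sets; ${\tt H}\prec{\tt H}'$ iff ${\tt H}'$ is obtained from ${\tt H}$ by adding one edge. With constant coefficients $A=M=R$, each multipath contributes $\mathcal F({\tt H})=R^{\otimes(\#\text{components})}\cong R$, and covering maps are multiplications (identity under these identifications). Fix a total order on the vertices; order components of a multipath by minimal vertex; for ${\tt H}\prec{\tt H}\cup e$ let $s,t$ be the indices of the components containing the source and target of $e$, and let $\sigma({\tt H},{\tt H}\cup e)=t+1$ if $t>s$ and $s$ if $s>t$ (mod 2). Then $C^n_\mu({\tt G};R)=\bigoplus_{{\tt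 H}\in P({\tt G}),\#E({\tt H})=n}\mathcal F({\tt H})$ with $d=\sum_{{\tt H}\prec{\tt H}'}(-1)^{\sigma({\tt H},{\tt H}')}\mathcal F({\tt H}\prec{\tt H}')$, and $\mathrm{H}^*_\mu({\tt G};R)$ is its cohomology. A ring homomorphism $f\colon R\to S$ acts via extension of scalars $S\otimes_R(-)$, using $S\otimes_R R^{\otimes k}\cong S$; a regular morphism $\phi\colon{\tt G}'\to{\tt G}$ acts through the cochain map projecting $C_\mu({\tt G};R)$ onto summands indexed by multipaths in the image of $P({\tt G}')$ (edges $\phi(E({\tt H}))$), identified with the summands of $C_\mu({\tt G}';R)$. *)

(* Defs.v *)
From HB Require Import structures.
From mathcomp Require Import all_boot all_order all_algebra.
Set Implicit Arguments. Unset Strict Implicit. Unset Printing Implicit Defensive.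
Import GRing.Theory.
Local Open Scope ring_scope.

Record digraph := Digraph {
  vtx : finType;
  edg : {set vtx * vtx};
  edg_noloop : forall v : vtx, (v, v) \notin edg }.

Definition regular (G' G : digraph) (phi : vtx G' -> vtx G) : Prop :=
  injective phi /\ (forall u v, (u, v) \in edg G' -> (phi u, phi v) \in edg G).

(** Multipaths: spanning subgraphs (given by their edge set) whose components
    are isolated vertices or simple directed paths, i.e. in- and out-degrees
    are at most 1 and there is no directed cycle. *)
Definition hrel (V : finType) (H : {set V * V}) : rel V := fun x y => (x, y) \in H.

Definition is_multipath (G : digraph) (H : {set vtx G * vtx G}) : bool :=
  [&& H \subset edg G,
      [forall v, #|[set e in H | e.1 == v]| <= 1]%N,
      [forall v, #|[set e in H | e.2 == v]| <= 1]%N &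
      [forall e in H, ~~ connect (hrel H) e.2 e.1]].

(** Connected components of the underlying undirected graph; the total order
    on vertices is the enumeration order of the finType (enum_rank). *)
Definition uadj (V : finType) (H : {set V * V}) : rel V :=
  fun x y => ((x, y) \in H) || ((y, x) \in H).

Definition cmin (V : finType) (H : {set V * V}) (v : V) : V :=
  [arg min_(x < v | connect (uadj H) v x) (enum_rank x : nat)].

(** index (starting from 1) of the component containing v, components being
    ordered by their minimal vertex *)
Definition cidx (V : finType) (H : {set V * V}) (v : V) : nat :=
  #|[set x : V | (cmin H x == x) && (enum_rank x <= enum_rank (cmin H v))%N]|.

Definition sigma (V : finType) (H : {set V * V}) (e : V * V) : nat :=
  let s := cidx H e.1 in let t := cidx H e.2 in
  if (s < t)%N then t.+1 else s.

(** Cochains: C_mu(G;R) = (+)_{H in P(G)} R, represented as functions on edge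
    sets, vanishing outside multipaths; degree n = multipaths with n edges. *)
Definition cochain (G : digraph) (R : comPzRingType) :=
  {ffun {set vtx G * vtx G} -> R}.

Definition in_degree (G : digraph) (R : comPzRingType) (n : nat)
  (x : cochain G R) : Prop :=
  forall H, ~~ (is_multipath H && (#|H| == n)) -> x H = 0.

Definition mdiff (G : digraph) (R : comPzRingType) (x : cochain G R)
  : cochain G R :=
  [ffun H' => if is_multipath H'
              then \sum_(e in H') (-1) ^+ (sigma (H' :\ e) e) * x (H' :\ e)
              else 0].

Definition cocycle (G : digraph) (R : comPzRingType) (n : nat)
  (x : cochain G R) : Prop :=
  in_degree n x /\ mdiff x = 0.

Definition coboundary (G : digraph) (R : comPzRingType) (n : nat)
  (x : cochain G R) : Prop :=
  if n is m.+1 then exists2 y, in_degree m y & x = mdiff y else x = 0.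

Definition cohom_eq (G : digraph) (R : comPzRingType) (n : nat)
  (x y : cochain G R) : Prop := coboundary n (x - y).

(** Action of a ring homomorphism: extension of scalars S (x)_R -, which on
    each summand S (x)_R R = S is f. *)
Definition mapc (G : digraph) (R S : comPzRingType) (f : R -> S)
  (x : cochain G R) : cochain G S := [ffun H => f (x H)].

Definition img_edges (V' V : finType) (phi : V' -> V) (H : {set V' * V'})
  : {set V * V} := [set (phi e.1, phi e.2) | e in H].

(** Canonical sign correcting the identification of the summand indexed by
    phi(H) in C(G) with the summand indexed by H in C(G'): computed along the
    chain adding the edges of H in enumeration order. *)
Fixpoint eps_aux (V' V : finType) (phi : V' -> V) (H0 : {set V' * V'})
  (s : seq (V' * V')) : nat :=
  match s with
  | [::] => 0
  | e :: s' => sigma H0 e + sigma (img_edges phi H0) (phi e.1, phi e.2)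
               + eps_aux phi (e |: H0) s'
  end%N.

Definition eps (V' V : finType) (phi : V' -> V) (H : {set V' * V'}) : nat :=
  eps_aux phi set0 (enum H).

(** Action of a regular morphism phi : G' -> G: projection of C(G) onto the
    summands indexed by multipaths phi(H), H in P(G'), identified with the
    summands of C(G'). *)
Definition pullc (G' G : digraph) (R : comPzRingType) (phi : vtx G' -> vtx G)
  (x : cochain G R) : cochain G' R :=
  [ffun H => if is_multipath H then (-1) ^+ (eps phi H) * x (img_edges phi H)
             else 0].

Definition bimap (G' G : digraph) (R S : comPzRingType) (phi : vtx G' -> vtx G)
  (f : R -> S) (x : cochain G R) : cochain G' S := pullc phi (mapc f x).

(* Main.v *)
Require Import Defs.
From HB Require Import structures.
From mathcomp Require Import all_boot all_order all_algebra.
Import GRing.Theory.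
Local Open Scope ring_scope.
Set Implicit Arguments. Unset Strict Implicit. Unset Printing Implicit Defensive.

Section Abstract.
Local Open Scope nat_scope.

Lemma odd_sum_eq (I : finType) (P : pred I) (F G : I -> nat) :
  (forall i, P i -> odd (F i) = odd (G i)) ->
  odd (\sum_(i | P i) F i) = odd (\sum_(i | P i) G i).
Proof.
move=> h; apply: (big_ind2 (fun a b => odd a = odd b)) => //.
by move=> a b c d e1 e2; rewrite !oddD e1 e2.
Qed.

Lemma sumD1 (I : finType) (A : {set I}) a (F : I -> nat) : a \in A ->
  \sum_(i in A) F i = F a + \sum_(i in A :\ a) F i.
Proof. by move=> aA; rewrite (big_setD1 a aA). Qed.

Variable T : finType.
Implicit Types (S : {set T}) (x d p q : T) (k : T -> nat).
Definition cp (k1 k2 : T -> nat) p q : nat := (k1 p < k1 q) && (k2 q < k2 p).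
Definition inv (k1 k2 : T -> nat) (S : {set T}) : nat :=
  \sum_(p in S) \sum_(q in S) cp k1 k2 p q.
Definition pos (k : T -> nat) (S : {set T}) (x : T) : nat :=
  \sum_(q in S) (k q <= k x).

Lemma pos_D1 k S x d : d \in S -> pos k S x = (k d <= k x) + pos k (S :\ d) x.
Proof. by move=> dS; rewrite /pos (sumD1 _ dS). Qed.

Lemma pos_self k S x : {in S &, injective k} -> x \in S ->
  pos k S x = (\sum_(q in S :\ x) (k q < k x)).+1.
Proof.
move=> ik xS; rewrite (pos_D1 _ _ xS) leqnn add1n; congr _.+1.
apply: eq_bigr => q; rewrite in_setD1 => /andP[qx qS].
rewrite leq_eqVlt; case: eqP => //= e; by rewrite (ik _ _ qS xS e) eqxx in qx.
Qed.

Lemma inv_eq (k1 k2 : T -> nat) (k2' : T -> nat) S : {in S, k2 =1 k2'} -> inv k1 k2 S = inv k1 k2' S.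
Proof.
move=> h; apply: eq_bigr => p pS; apply: eq_bigr => q qS; by rewrite /cp !h.
Qed.

Lemma inv_del (k1 k2 : T -> nat) S x : {in S &, injective k1} -> {in S &, injective k2} ->
  x \in S ->
  odd (inv k1 k2 S) = odd (inv k1 k2 (S :\ x)) (+) odd (pos k1 S x) (+) odd (pos k2 S x).
Proof.
move=> i1 i2 xS.
have E1 : forall p, p \in S -> \sum_(q in S) cp k1 k2 p q = cp k1 k2 p x + \sum_(q in S :\ x) cp k1 k2 p q.
  by move=> p _; rewrite (sumD1 _ xS).
have -> : inv k1 k2 S = inv k1 k2 (S :\ x) +
   \sum_(q in S :\ x) (((k1 x < k1 q) && (k2 q < k2 x)) + ((k1 q < k1 x) && (k2 x < k2 q))).
  rewrite /inv (sumD1 _ xS) (E1 x xS) {1}/cp ltnn add0n.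
  have E2 : \sum_(i in S :\ x) \sum_(q in S) cp k1 k2 i q =
     \sum_(i in S :\ x) cp k1 k2 i x + \sum_(i in S :\ x) \sum_(q in S :\ x) cp k1 k2 i q.
    rewrite -big_split; apply: eq_bigr => i; rewrite in_setD1 => /andP[_ iS]; exact: E1.
  rewrite E2 addnA addnC; congr (_ + _); rewrite -big_split; apply: eq_bigr => q _.
  by rewrite /cp.
rewrite (pos_self i1 xS) (pos_self i2 xS) /= oddD.
rewrite (@odd_sum_eq _ _ _ (fun q => (k1 q < k1 x) + (k2 q < k2 x))).
  by rewrite big_split /= oddD; case: (odd (inv _ _ _)); case: (odd (\sum_(i in _) _)); case: (odd (\sum_(i in _) _)).
move=> q; rewrite in_setD1 => /andP[qx qS].
have n1 : k1 q != k1 x by apply: contra qx => /eqP e; apply/eqP; apply: i1.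
have n2 : k2 q != k2 x by apply: contra qx => /eqP e; apply/eqP; apply: i2.
move: n1 n2; case: (ltngtP (k1 x) (k1 q)) => h1 n1 //=; case: (ltngtP (k2 x) (k2 q)) => h2 n2 //=;
  by rewrite ?h1 ?h2 ?eqxx in n1 n2 *.
Qed.


Lemma inv_same (k1 k2 k2' : T -> nat) S x : {in S &, injective k1} -> {in S &, injective k2} ->
  x \in S -> {in S :\ x, k2 =1 k2'} ->
  odd (inv k1 k2 S) (+) odd (inv k1 k2' (S :\ x)) = odd (pos k1 S x) (+) odd (pos k2 S x).
Proof.
move=> i1 i2 xS e; rewrite (inv_del i1 i2 xS) -(inv_eq _ e).
by case: (odd (inv _ _ _)); case: (odd (pos _ _ _)); case: (odd (pos _ _ _)).
Qed.

Lemma inj_sub (k : T -> nat) S S' : S' \subset S -> {in S &, injective k} -> {in S' &, injective k}.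
Proof. by move=> sS ik a b aS bS; apply: ik; apply: (subsetP sS). Qed.

Lemma inv_diff (k1 k2 k2' : T -> nat) S d c : {in S &, injective k1} -> {in S &, injective k2} ->
  d \in S -> c \in S -> d != c -> k2 d < k2 c -> k2' c = k2 d ->
  {in S, forall t, t != d -> t != c -> k2' t = k2 t} ->
  odd (inv k1 k2 S) (+) odd (inv k1 k2' (S :\ d)) = odd (pos k1 S d) (+) ~~ odd (pos k2 S c).
Proof.
move=> i1 i2 dS cS dk lt ec e.
have sub : S :\ d \subset S by apply: subsetDl.
have cS' : c \in S :\ d by rewrite in_setD1 eq_sym dk.
have i1' := inj_sub sub i1; have i2' := inj_sub sub i2.
have i2'' : {in S :\ d &, injective k2'}.
  move=> a b; rewrite !in_setD1 => /andP[ad aS] /andP[bd bS].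
  case: (eqVneq a c) => [->|ac]; case: (eqVneq b c) => [->|bc] //.
  - by rewrite ec e // => /i2 h; move: (h dS bS) => hb; rewrite hb eqxx in bd.
  - by rewrite ec e // => /esym /i2 h; move: (h dS aS) => hb; rewrite hb eqxx in ad.
  by rewrite !e //; apply: i2.
rewrite (inv_del i1 i2 dS) (inv_del i1' i2' cS') (inv_del i1' i2'' cS').
have -> : inv k1 k2' ((S :\ d) :\ c) = inv k1 k2 ((S :\ d) :\ c).
  apply: inv_eq => t; rewrite !in_setD1 => /and3P[tk td tS]; by rewrite e.
have -> : pos k2' (S :\ d) c = pos k2 S d.
  rewrite (pos_D1 _ _ cS') (pos_D1 _ _ dS) ec leqnn; congr (_ + _).
  rewrite (pos_D1 _ _ cS') leqNgt lt /= add0n /pos; apply: eq_bigr => t.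
  by rewrite !in_setD1 => /and3P[tk td tS]; rewrite ec e.
have -> : pos k2 S c = (pos k2 (S :\ d) c).+1.
  by rewrite (pos_D1 _ _ dS) (ltnW lt).
rewrite /=.
by case: (odd (inv _ _ _)); case: (odd (pos k1 S d)); case: (odd (pos k2 S d));
   case: (odd (pos k1 _ c)); case: (odd (pos k2 _ c)).
Qed.

Lemma pos_mono (k : T -> nat) S a b : b \in S -> k a < k b -> pos k S a < pos k S b.
Proof.
move=> bS lt; rewrite (pos_D1 _ _ bS) (pos_D1 _ b bS) leqnn (leqNgt (k b)) lt /= add0n add1n ltnS.
apply: leq_sum => t _; case: (k t <= k a) / idP => // h; by rewrite (leq_trans h (ltnW lt)).
Qed.

Lemma pos_lt (k : T -> nat) S a b : {in S &, injective k} -> a \in S -> b \in S -> a != b ->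
  (pos k S a < pos k S b) = (k a < k b).
Proof.
move=> ik aS bS ab; case: (ltngtP (k a) (k b)) => h.
- by rewrite (pos_mono bS h).
- by apply/negbTE; rewrite -leqNgt ltnW // (pos_mono aS h).
- by rewrite (ik _ _ aS bS h) eqxx in ab.
Qed.

Lemma merge_inv (k1 k2 k2' : T -> nat) S a b :
  {in S &, injective k1} -> {in S &, injective k2} -> a \in S -> b \in S -> a != b ->
  k2' (if k1 a < k1 b then a else b) = (if k2 a < k2 b then k2 a else k2 b) ->
  {in S, forall t, t != a -> t != b -> k2' t = k2 t} ->
  odd (inv k1 k2 S) (+) odd (inv k1 k2' (S :\ (if k1 a < k1 b then b else a))) =
  odd (if pos k1 S a < pos k1 S b then (pos k1 S b).+1 else pos k1 S a) (+)
  odd (if pos k2 S a < pos k2 S b then (pos k2 S b).+1 else pos k2 S a).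
Proof.
move=> i1 i2 aS bS ab ek0 e.
have ba : b != a by rewrite eq_sym.
have n1 : k1 a != k1 b by apply: contra ab => /eqP h; apply/eqP; apply: i1.
have n2 : k2 a != k2 b by apply: contra ab => /eqP h; apply/eqP; apply: i2.
rewrite (pos_lt i1 aS bS ab) (pos_lt i2 aS bS ab).
case: (ltngtP (k1 a) (k1 b)) ek0 n1 => h1 ek0 n1 //; case: (ltngtP (k2 a) (k2 b)) ek0 n2 => h2 ek0 n2 //=.
-
  rewrite (inv_same i1 i2 bS); first by case: (odd (pos k1 S b)); case: (odd (pos k2 S b)).
  move=> t; rewrite in_setD1 => /andP[tb tS]; case: (eqVneq t a) => [->|ta]; first by rewrite ek0.
  by rewrite e.
-
  rewrite (inv_diff i1 i2 bS aS ba h2 ek0); last by move=> t tS tb ta; rewrite e.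
  by case: (odd (pos k1 S b)); case: (odd (pos k2 S a)).
-
  rewrite (inv_diff i1 i2 aS bS ab h2 ek0); last by move=> t tS ta tb; rewrite e.
  by case: (odd (pos k1 S a)); case: (odd (pos k2 S b)).
- rewrite (inv_same i1 i2 aS); first by [].
  move=> t; rewrite in_setD1 => /andP[ta tS]; case: (eqVneq t b) => [->|tb]; first by rewrite ek0.
  by rewrite e.
Qed.

End Abstract.

Section Conn.
Local Open Scope nat_scope.

Lemma connect_min (V : finType) (e : rel V) (R : V -> V -> Prop) :
  (forall x, R x x) -> (forall x y z, R x y -> R y z -> R x z) ->
  (forall x y, e x y -> R x y) -> forall x y, connect e x y -> R x y.
Proof.
move=> Rr Rt Re x y /connectP [p]; elim: p x => [|z p IH] x /=; first by move=> _ ->.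
by move=> /andP[exz pz] ly; apply: Rt (Re _ _ exz) (IH z pz ly).
Qed.

Definition rk (V : finType) (x : V) : nat := enum_rank x.

Lemma rk_inj (V : finType) : injective (@rk V).
Proof. by move=> x y /eqP; rewrite /rk (inj_eq val_inj) => /eqP /enum_rank_inj. Qed.

Lemma rk_lt (V : finType) (x : V) : rk x < #|V|.
Proof. by rewrite /rk; case: (enum_rank x) => /= m; rewrite cardE. Qed.

Variable V : finType.
Implicit Types (H : {set V * V}) (x y z u w v : V).

Definition cls H x y := connect (uadj H) x y.
Definition root H x := cmin H x == x.

Lemma uadj_sym H : symmetric (uadj H).
Proof. by move=> x y; rewrite /uadj orbC. Qed.

Lemma cls_sym H x y : cls H x y = cls H y x.
Proof. exact: (sym_connect_sym (uadj_sym H)). Qed.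

Lemma cls_trans H y x z : cls H x y -> cls H y z -> cls H x z.
Proof. exact: connect_trans. Qed.

Lemma cls_refl H x : cls H x x.
Proof. exact: connect0. Qed.

Lemma cminP H v : cls H v (cmin H v) /\ (forall y, cls H v y -> rk (cmin H v) <= rk y).
Proof.
rewrite /cmin; case: arg_minnP; first exact: connect0.
by move=> i ci hi; split=> // y; apply: hi.
Qed.

Lemma cmin_char H v m : cls H v m -> (forall y, cls H v y -> rk m <= rk y) -> cmin H v = m.
Proof.
move=> vm hm; have [c1 c2] := cminP H v; apply: rk_inj; apply/eqP; rewrite eqn_leq.
by rewrite c2 // hm.
Qed.

Lemma cmin_eq H x y : cls H x y -> cmin H x = cmin H y.
Proof.
move=> xy; have [c1 c2] := cminP H y; apply: cmin_char; first exact: cls_trans c1.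
by move=> z xz; apply: c2; apply: cls_trans xz; rewrite cls_sym.
Qed.

Lemma cls_cmin H x y : cls H x y = (cmin H x == cmin H y).
Proof.
apply/idP/eqP; first exact: cmin_eq.
move=> e; have [c1 _] := cminP H x; have [d1 _] := cminP H y.
by apply: cls_trans c1 _; rewrite e cls_sym.
Qed.

Lemma cmin_idem H x : cmin H (cmin H x) = cmin H x.
Proof. by apply: cmin_eq; rewrite cls_sym; case: (cminP H x). Qed.

Lemma root_cmin H x : root H (cmin H x).
Proof. by rewrite /root cmin_idem. Qed.

Lemma cls_mono H H' x y : H \subset H' -> cls H x y -> cls H' x y.
Proof.
move=> sHH'; apply: connect_sub => p q; rewrite /uadj => /orP[] h; apply: connect1;
  by rewrite /uadj (subsetP sHH' _ h) ?orbT.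
Qed.

Section Merge.
Variables (H : {set V * V}) (u w : V).
Hypothesis nuw : ~~ cls H u w.

Let H' := (u, w) |: H.
Let lab z := if cls H z w then cmin H u else cmin H z.

Lemma uadjU1 p q : uadj H' p q = [|| uadj H p q, (p, q) == (u, w) | (q, p) == (u, w)].
Proof. by rewrite /uadj !in_setU1; case: ((p,q) \in H); case: ((q,p) \in H); case: (_ == _); case: (_ == _). Qed.

Lemma cls_merge x y : cls H' x y = (lab x == lab y).
Proof.
apply/idP/idP.
  move=> h; apply/eqP; move: h; apply: (@connect_min _ _ (fun x y => lab x = lab y)).
  - by [].
  - by move=> a b c -> ->.
  move=> p q; rewrite uadjU1 => /or3P[h|/eqP[-> ->]|/eqP[-> ->]].
  - have hc : cls H p q by apply: connect1.
    rewrite /lab (cmin_eq hc); case: (cls H p w) / idP => pw; case: (cls H q w) / idP => qw //.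
    + by case: qw; apply: cls_trans pw; rewrite cls_sym.
    + by case: pw; apply: cls_trans qw.
  - by rewrite /lab (negbTE nuw) cls_refl.
  - by rewrite /lab (negbTE nuw) cls_refl.
have sH : H \subset H' by apply/subsetP => p pH; rewrite in_setU1 pH orbT.
have euw : cls H' u w by apply: connect1; rewrite uadjU1 eqxx orbT.
rewrite /lab; case: (cls H x w) / idP => xw; case: (cls H y w) / idP => yw /eqP e.
- apply: (cls_mono sH); apply: cls_trans xw _; by rewrite cls_sym.
- apply: (cls_trans (cls_mono sH xw)); apply: (@cls_trans _ u).
    by rewrite cls_sym.
  by apply: (cls_mono sH); rewrite cls_cmin e.
- apply: (@cls_trans _ u).
    by apply: (cls_mono sH); rewrite cls_cmin e.
  apply: (cls_trans euw); apply: (cls_mono sH); by rewrite cls_sym.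
- by apply: (cls_mono sH); rewrite cls_cmin e.
Qed.

Lemma cmin_merge x : cmin H' x =
  if cls H x u || cls H x w then
    (if rk (cmin H u) < rk (cmin H w) then cmin H u else cmin H w)
  else cmin H x.
Proof.
have [au au'] := cminP H u; have [bw bw'] := cminP H w.
have aw : ~~ cls H (cmin H u) w.
  apply: contra nuw => h; apply: cls_trans au h.
have labx : forall z, cls H z u || cls H z w -> lab z = cmin H u.
  move=> z /orP[] h; rewrite /lab; case: (cls H z w) / idP => // zw.
  exact: cmin_eq.
case: ifP => hx.
  apply: cmin_char.
  - rewrite cls_merge labx //; case: ifP => _; apply/eqP/esym/labx.
    + by rewrite cls_sym au.
    + by rewrite [cls H _ w]cls_sym bw orbT.
  - move=> y; rewrite cls_merge labx // /lab; case: (cls H y w) / idP => yw e.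
    + apply: leq_trans (bw' _ _); first by case: ifP => // /ltnW.
      by rewrite cls_sym.
    + apply: leq_trans (au' _ _); first by case: ifP => // /negbT; rewrite -leqNgt.
      by rewrite cls_cmin e.
have [cx cx'] := cminP H x.
have nxw : ~~ cls H x w by apply: contraFN hx => ->; rewrite orbT.
have nxu : ~~ cls H x u by apply: contraFN hx => ->.
apply: cmin_char.
- rewrite cls_merge /lab (negbTE nxw).
  have -> : cls H (cmin H x) w = false.
    apply/negbTE; apply: contra nxw; apply: cls_trans cx.
  by rewrite cmin_idem.
- move=> y; rewrite cls_merge /lab (negbTE nxw); case: (cls H y w) / idP => yw e.
  + by case/negP: nxu; rewrite cls_cmin e.
  + by apply: cx'; rewrite cls_cmin e.
Qed.

Lemma root_merge x : root H' x =
  root H x && (x != (if rk (cmin H u) < rk (cmin H w) then cmin H w else cmin H u)).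
Proof.
have [au _] := cminP H u; have [bw _] := cminP H w.
have ab : cmin H u != cmin H w by rewrite -cls_cmin.
rewrite /root cmin_merge; case: ifP => hx.
  case/orP: hx => h.
  - have -> : cmin H x = cmin H u by apply: cmin_eq.
    have xw : x != cmin H w.
      apply: contra nuw => /eqP e; rewrite cls_sym; apply: (@cls_trans _ x); last exact: h.
      by rewrite e.
    case: ifP => _; first by rewrite xw andbT.
    by rewrite [cmin H w == x]eq_sym (negbTE xw) [x == _]eq_sym andbN.
  - have -> : cmin H x = cmin H w by apply: cmin_eq.
    have xu : x != cmin H u.
      apply: contra nuw => /eqP e; apply: (@cls_trans _ x); last exact: h.
      by rewrite e.
    case: ifP => _; first by rewrite [cmin H u == x]eq_sym (negbTE xu) [x == _]eq_sym andbN.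
    by rewrite xu andbT.
have nxu : ~~ cls H x u by apply: contraFN hx => ->.
have nxw : ~~ cls H x w by apply: contraFN hx => ->; rewrite orbT.
have xu : x != cmin H u.
  apply: contra nxu => /eqP ->; by rewrite cls_sym.
have xw : x != cmin H w.
  apply: contra nxw => /eqP ->; by rewrite cls_sym.
by case: ifP => _; rewrite ?xu ?xw andbT.
Qed.
End Merge.
End Conn.

Section Img.
Local Open Scope nat_scope.
Variables (V' V : finType) (phi : V' -> V).
Hypothesis phi_inj : injective phi.

Definition pmap (e : V' * V') : V * V := (phi e.1, phi e.2).

Lemma pmap_inj : injective pmap.
Proof. by case=> a b [c d] [/phi_inj -> /phi_inj ->]. Qed.

Lemma mem_img (H : {set V' * V'}) a b : ((phi a, phi b) \in img_edges phi H) = ((a, b) \in H).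
Proof. by rewrite -(mem_imset _ _ pmap_inj). Qed.

Lemma img_inv (H : {set V' * V'}) p q : (p, q) \in img_edges phi H ->
  exists a b, [/\ p = phi a, q = phi b & (a, b) \in H].
Proof. by case/imsetP => [[a b] ab [-> ->]]; exists a, b. Qed.

Lemma connect_img (r : rel V') (r' : rel V) :
  (forall p q, r' p q -> exists a b, [/\ p = phi a, q = phi b & r a b]) ->
  forall p q, connect r' p q -> p = q \/ exists a b, [/\ p = phi a, q = phi b & connect r a b].
Proof.
move=> hr; apply: connect_min.
- by move=> x; left.
- move=> x y z [<-|[a [b [-> -> ab]]]] // [<-|[c [d [e1 -> cd]]]]; first by right; exists a, b.
  right; exists a, d; split=> //; apply: connect_trans ab _; by rewrite (phi_inj e1).
- move=> p q /hr [a [b [-> -> ab]]]; right; exists a, b; split=> //; exact: connect1.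
Qed.

Lemma cls_img (H : {set V' * V'}) x y : cls (img_edges phi H) (phi x) (phi y) = cls H x y.
Proof.
apply/idP/idP.
  move/(connect_img (r := uadj H)); case.
  - move=> p q; rewrite /uadj => /orP[] /img_inv [a [b [-> -> ab]]]; [exists a, b | exists b, a];
      by rewrite /uadj ab ?orbT.
  - by move/phi_inj ->; apply: cls_refl.
  by case=> a [b [/phi_inj -> /phi_inj ->]].
apply: (@connect_min _ _ (fun a b => cls (img_edges phi H) (phi a) (phi b))).
- by move=> a; apply: cls_refl.
- by move=> a b c; apply: cls_trans.
by move=> a b h; apply: connect1; rewrite /uadj !mem_img.
Qed.

Lemma cls_img_out (H : {set V' * V'}) z y : z \notin codom phi -> cls (img_edges phi H) z y -> z = y.
Proof.
move=> zn /(connect_img (r := uadj H)); case.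
- move=> p q; rewrite /uadj => /orP[] /img_inv [a [b [-> -> ab]]]; [exists a, b | exists b, a];
    by rewrite /uadj ab ?orbT.
- by [].
by case=> a [b [ea _ _]]; case/negP: zn; rewrite ea codom_f.
Qed.

Lemma hrel_img (H : {set V' * V'}) x y :
  connect (hrel (img_edges phi H)) (phi x) (phi y) -> connect (hrel H) x y.
Proof.
move/(connect_img (r := hrel H)); case.
- by move=> p q /img_inv [a [b [-> -> ab]]]; exists a, b.
- by move/phi_inj ->; apply: connect0.
by case=> a [b [/phi_inj -> /phi_inj ->]].
Qed.

End Img.

Lemma card_sum' (I : finType) (P : pred I) : #|[set i | P i]| = (\sum_i (P i : nat))%N.
Proof. rewrite -sum1_card big_mkcond; apply: eq_bigr => i _; rewrite inE; by case: (P i). Qed.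

Lemma sum_sumType (I1 I2 : finType) (F : I1 + I2 -> nat) :
  (\sum_i F i = \sum_i F (inl i) + \sum_i F (inr i))%N.
Proof. by rewrite big_sumType. Qed.

Section Key.
Local Open Scope nat_scope.
Variables (V' V : finType) (phi : V' -> V).
Hypothesis phi_inj : injective phi.
Notation K H := (img_edges phi H).

Definition Sset (H : {set V' * V'}) : {set V' + V} :=
  [set t | match t with inl x => root H x | inr z => z \notin codom phi end].
Definition fmap (H : {set V' * V'}) (t : V' + V) : V :=
  match t with inl x => cmin (K H) (phi x) | inr z => z end.
Definition k1 (t : V' + V) : nat := match t with inl x => rk x | inr z => #|V'| + rk z end.
Definition k2 (H : {set V' * V'}) t := rk (fmap H t).
Definition J (H : {set V' * V'}) := inv k1 (k2 H) (Sset H).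

Lemma k1_inj : injective k1.
Proof.
case=> [x|z] [y|t] /=.
- by move/rk_inj ->.
- by move=> e; have := rk_lt x; rewrite e -{2}(addn0 #|V'|) ltn_add2l.
- by move=> e; have := rk_lt y; rewrite -e -{2}(addn0 #|V'|) ltn_add2l.
- by move/addnI/rk_inj ->.
Qed.

Lemma k1_inj' (S : {set V' + V}) : {in S &, injective k1}.
Proof. by move=> a b _ _; apply: k1_inj. Qed.

Lemma fmap_inj H : {in Sset H &, injective (fmap H)}.
Proof.
move=> s t; rewrite !inE; case: s => [x|z]; case: t => [y|z'] /=.
- move=> rx ry e; have : cls (K H) (phi x) (phi y) by rewrite cls_cmin e.
  rewrite cls_img // cls_cmin (eqP rx) (eqP ry) => /eqP -> //.
- move=> rx zn e; have [c _] := cminP (K H) (phi x).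
  by rewrite e cls_sym in c; move: (cls_img_out phi_inj zn c) => ex; case/negP: zn; rewrite ex codom_f.
- move=> zn ry e; have [c _] := cminP (K H) (phi y).
  by rewrite -e cls_sym in c; move: (cls_img_out phi_inj zn c) => ex; case/negP: zn; rewrite ex codom_f.
- by move=> _ _ ->.
Qed.

Lemma k2_inj H : {in Sset H &, injective (k2 H)}.
Proof. by move=> s t sS tS /rk_inj; apply: fmap_inj. Qed.

Lemma fmap_img H : fmap H @: Sset H = [set k | root (K H) k].
Proof.
apply/setP => k; rewrite inE; apply/imsetP/idP.
  case=> [[x|z]]; rewrite inE /= => h ->; first exact: root_cmin.
  rewrite /root; apply/eqP; apply: cmin_char; first exact: cls_refl.
  by move=> y /(cls_img_out phi_inj h) ->.
move=> rk_k; case: (boolP (k \in codom phi)) rk_k => [/codomP [y ->]|kn] rk_k.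
  exists (inl (cmin H y)); first by rewrite inE /= root_cmin.
  rewrite /= -[LHS](eqP rk_k); apply: cmin_eq; rewrite cls_img //; have [c _] := cminP H y.
  by [].
by exists (inr k); rewrite ?inE.
Qed.

Lemma cidx_pos1 H u : cidx H u = pos k1 (Sset H) (inl (cmin H u)).
Proof.
rewrite /cidx card_sum' /pos [RHS]big_mkcond sum_sumType /=.
rewrite [X in _ = _ + X]big1 ?addn0; last first.
  move=> z _; case: ifP => // _; apply/eqP; rewrite eqb0 -ltnNge.
  by apply: leq_trans (rk_lt _) (leq_addr _ _).
apply: eq_bigr => y _; rewrite inE /root; by case: (cmin H y == y).
Qed.

Lemma cidx_pos2 H u : cidx (K H) (phi u) = pos (k2 H) (Sset H) (inl (cmin H u)).
Proof.
have e : fmap H (inl (cmin H u)) = cmin (K H) (phi u).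
  rewrite /=; apply: cmin_eq; rewrite cls_img //; have [c _] := cminP H u; by rewrite cls_sym.
rewrite /pos /k2 e -(big_imset (fun k => nat_of_bool (rk k <= rk (cmin (K H) (phi u)))) (@fmap_inj H)) fmap_img.
rewrite /cidx card_sum' [RHS]big_mkcond /=; apply: eq_bigr => k _; rewrite inE /root; by case: (_ == k).
Qed.

Lemma key H u w : ~~ cls H u w ->
  odd (sigma H (u, w)) (+) odd (sigma (K H) (phi u, phi w)) = odd (J H) (+) odd (J ((u, w) |: H)).
Proof.
move=> nuw.
have nK : ~~ cls (K H) (phi u) (phi w) by rewrite cls_img.
have KU : K ((u, w) |: H) = (phi u, phi w) |: K H by rewrite /img_edges imsetU1.
set a : V' + V := inl (cmin H u); set b : V' + V := inl (cmin H w).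
have aS : a \in Sset H by rewrite /a inE /= root_cmin.
have bS : b \in Sset H by rewrite /b inE /= root_cmin.
have ab : a != b by rewrite /a /b; apply/eqP => [[/eqP]]; rewrite -cls_cmin (negbTE nuw).
have SU : Sset ((u, w) |: H) = Sset H :\ (if k1 a < k1 b then b else a).
  apply/setP => [[x|z]]; rewrite !inE /=.
    by rewrite (root_merge nuw); case: ifP => _; rewrite andbC.
  by case: ifP.
have fa : fmap H a = cmin (K H) (phi u).
  rewrite /=; apply: cmin_eq; rewrite cls_img //; have [c _] := cminP H u; by rewrite cls_sym.
have fb : fmap H b = cmin (K H) (phi w).
  rewrite /=; apply: cmin_eq; rewrite cls_img //; have [c _] := cminP H w; by rewrite cls_sym.
have ek0 : k2 ((u, w) |: H) (if k1 a < k1 b then a else b) =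
           (if k2 H a < k2 H b then k2 H a else k2 H b).
  rewrite /k2 fa fb.
  have -> : fmap ((u, w) |: H) (if k1 a < k1 b then a else b) =
            (if rk (cmin (K H) (phi u)) < rk (cmin (K H) (phi w)) then cmin (K H) (phi u)
             else cmin (K H) (phi w)).
    case: ifP => _; rewrite /a /b /= KU (cmin_merge nK) !cls_img //.
    + have [c _] := cminP H u; by rewrite [cls H _ u]cls_sym c.
    + have [c _] := cminP H w; by rewrite [cls H _ w]cls_sym c orbT.
  by case: ifP.
have eo : {in Sset H, forall t, t != a -> t != b -> k2 ((u, w) |: H) t = k2 H t}.
  case=> [x|z] // ; rewrite inE /= => rx ha hb.
  rewrite /k2 /= KU (cmin_merge nK) !cls_img //.
  have -> : cls H x u = false.
    apply/negP => h; case/negP: ha; rewrite /a; apply/eqP; congr inl.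
    by rewrite -(eqP rx); apply: cmin_eq.
  have -> : cls H x w = false.
    apply/negP => h; case/negP: hb; rewrite /b; apply/eqP; congr inl.
    by rewrite -(eqP rx); apply: cmin_eq.
  by [].
have := merge_inv (@k1_inj' _) (@k2_inj H) aS bS ab ek0 eo.
rewrite -SU /J => ->.
by rewrite /sigma /= -!cidx_pos1 -!cidx_pos2.
Qed.

End Key.

Section MP.
Local Open Scope nat_scope.
Variable V : finType.
Implicit Types (H : {set V * V}).

Definition mp H : bool :=
  [&& [forall v, #|[set e in H | e.1 == v]| <= 1],
      [forall v, #|[set e in H | e.2 == v]| <= 1] &
      [forall e in H, ~~ connect (hrel H) e.2 e.1]].


Lemma le1_eq (A : {set V * V}) x y : #|A| <= 1 -> x \in A -> y \in A -> x = y.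
Proof. by move/card_le1_eqP => h xA yA; apply: h. Qed.

Lemma out1 H v a b : mp H -> (v, a) \in H -> (v, b) \in H -> a = b.
Proof.
case/and3P => /forallP /(_ v) h _ _ va vb.
have := le1_eq h (_ : (v, a) \in [set e in H | e.1 == v]) (_ : (v, b) \in [set e in H | e.1 == v]).
by rewrite !inE va vb eqxx => /(_ isT isT) [].
Qed.

Lemma in1 H v a b : mp H -> (a, v) \in H -> (b, v) \in H -> a = b.
Proof.
case/and3P => _ /forallP /(_ v) h _ va vb.
have := le1_eq h (_ : (a, v) \in [set e in H | e.2 == v]) (_ : (b, v) \in [set e in H | e.2 == v]).
by rewrite !inE va vb eqxx => /(_ isT isT) [].
Qed.

Lemma hrel_mono H1 H2 x y : H1 \subset H2 -> connect (hrel H1) x y -> connect (hrel H2) x y.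
Proof.
move=> s; apply: connect_sub => a b h; apply: connect1; exact: (subsetP s).
Qed.

Lemma mp_sub H1 H2 : H1 \subset H2 -> mp H2 -> mp H1.
Proof.
move=> s /and3P[/forallP o /forallP i /forall_inP c]; apply/and3P; split.
- apply/forallP => v; apply: leq_trans (o v); apply: subset_leq_card.
  apply/subsetP => e; rewrite !inE => /andP[eH ->]; by rewrite (subsetP s _ eH).
- apply/forallP => v; apply: leq_trans (i v); apply: subset_leq_card.
  apply/subsetP => e; rewrite !inE => /andP[eH ->]; by rewrite (subsetP s _ eH).
- apply/forall_inP => e eH; apply: contra (c e (subsetP s _ eH)); exact: hrel_mono.
Qed.

Lemma conn_first (e : rel V) a b : connect e a b -> a = b \/ exists c, e a c /\ connect e c b.
Proof.
case/connectP => [[|c p]] /=; first by move=> _ ->; left.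
by case/andP => ac pc ->; right; exists c; split=> //; apply/connectP; exists p.
Qed.

Lemma conn_last (e : rel V) a b : connect e a b -> a = b \/ exists c, connect e a c /\ e c b.
Proof.
case/connectP => p; case/lastP: p => [|p c] /=; first by move=> _ ->; left.
rewrite rcons_path last_rcons => /andP[pp lc] ->; right; exists (last a p); split=> //.
by apply/connectP; exists p.
Qed.

Lemma cls_dir H x y : mp H -> cls H x y -> connect (hrel H) x y || connect (hrel H) y x.
Proof.
move=> m /connectP [p]; elim: p x => [|z p IH] x /=; first by move=> _ ->; rewrite connect0.
case/andP => /orP [xz|zx] pz ly; case/orP: (IH z pz ly) => h.
- by rewrite (connect_trans (connect1 (e:=hrel H) xz) h).
- case: (conn_last h) => [e1|[c [yc cz]]]; first by rewrite e1 (connect1 (e:=hrel H) xz).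
  by rewrite (in1 m xz cz) yc orbT.
- case: (conn_first h) => [e1|[c [zc cy]]]; first by rewrite -e1 (connect1 (e:=hrel H) zx) orbT.
  by rewrite (out1 m zx zc) cy.
- by rewrite (connect_trans h (connect1 (e:=hrel H) zx)) orbT.
Qed.

Lemma mp_nocls H u w : mp ((u, w) |: H) -> (u, w) \notin H -> ~~ cls H u w.
Proof.
move=> m nH; have s : H \subset (u, w) |: H by apply/subsetP => p pH; rewrite in_setU1 pH orbT.
have mH := mp_sub s m.
have ac : ~~ connect (hrel ((u, w) |: H)) w u.
  by case/and3P: m => _ _ /forall_inP /(_ (u, w)); rewrite in_setU1 eqxx; apply.
apply/negP => /(cls_dir mH) /orP[] h.
- case: (conn_first h) => [ew|[c [uc cw]]].
    by case/negP: ac; rewrite ew connect0.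
  have uwH : (u, w) \in (u, w) |: H by rewrite in_setU1 eqxx.
  have ucH : (u, c) \in (u, w) |: H by rewrite in_setU1 (_ : (u, c) \in H) ?orbT.
  by move: (out1 m ucH uwH) uc => -> ; rewrite /hrel (negbTE nH).
- by case/negP: ac; apply: hrel_mono h.
Qed.

End MP.

Lemma is_mpE (G : digraph) (H : {set vtx G * vtx G}) :
  is_multipath H = (H \subset edg G) && mp H.
Proof. by []. Qed.

Lemma mp_img (V' V : finType) (phi : V' -> V) (H : {set V' * V'}) :
  injective phi -> mp H -> mp (img_edges phi H).
Proof.
move=> pi m; apply/and3P; split.
- apply/forallP => v; apply/card_le1_eqP => e1 e2; rewrite !inE.
  case/andP => /imsetP [[a b] ab ->] /= /eqP e1v /andP [/imsetP [[c d] cd ->]] /= /eqP.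
  rewrite -e1v => /pi ca; move: cd; rewrite ca => cd; by rewrite (out1 m ab cd).
- apply/forallP => v; apply/card_le1_eqP => e1 e2; rewrite !inE.
  case/andP => /imsetP [[a b] ab ->] /= /eqP e1v /andP [/imsetP [[c d] cd ->]] /= /eqP.
  rewrite -e1v => /pi ca; move: cd; rewrite ca => cd; by rewrite (in1 m ab cd).
- apply/forall_inP => e /imsetP [[a b] ab ->] /=; apply/negP => /(hrel_img pi) h.
  by case/and3P: m => _ _ /forall_inP /(_ _ ab) /=; rewrite h.
Qed.

Lemma is_mp_img (G' G : digraph) (phi : vtx G' -> vtx G) (H : {set vtx G' * vtx G'}) :
  regular phi -> is_multipath H -> is_multipath (img_edges phi H).
Proof.
case=> pi pe; rewrite !is_mpE => /andP [s m]; rewrite mp_img // andbT.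
apply/subsetP => e /imsetP [[a b] ab ->] /=; apply: pe; exact: (subsetP s).
Qed.

Section Tele.
Local Open Scope nat_scope.

Lemma img_comp (V1 V2 V3 : finType) (phi : V1 -> V2) (psi : V2 -> V3) (H : {set V1 * V1}) :
  img_edges (psi \o phi) H = img_edges psi (img_edges phi H).
Proof. by rewrite /img_edges -imset_comp. Qed.

Lemma setU_cons (V : finType) (H0 : {set V * V}) e s :
  H0 :|: [set x in e :: s] = (e |: H0) :|: [set x in s].
Proof.
by apply/setP => x; rewrite !inE; case: (x == e); case: (x \in H0); case: (x \in s).
Qed.

Lemma setU_nil (V : finType) (H0 : {set V * V}) : H0 :|: [set x in [::]] = H0.
Proof. by apply/setP => x; rewrite !inE orbF. Qed.

Lemma tele_pre (V : finType) (H0 : {set V * V}) e s :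
  uniq (e :: s) -> {in e :: s, forall x, x \notin H0} -> mp (H0 :|: [set x in e :: s]) ->
  [/\ ~~ cls H0 e.1 e.2, uniq s, {in s, forall x, x \notin e |: H0} & mp ((e |: H0) :|: [set x in s])].
Proof.
case: e => u w /= /andP [ns us] nin m; split=> //.
- apply: mp_nocls; last by apply: nin; rewrite mem_head.
  apply: mp_sub m; apply/subsetP => x; rewrite !inE => /orP[->|->] //; by rewrite orbT.
- move=> x xs; rewrite in_setU1 negb_or nin ?inE ?xs ?orbT // andbT.
  by apply: contra ns => /eqP <-.
- by rewrite -setU_cons.
Qed.

Variables (V' V : finType) (phi : V' -> V).
Hypothesis phi_inj : injective phi.

Lemma tele s : forall H0 : {set V' * V'}, uniq s -> {in s, forall e, e \notin H0} ->
  mp (H0 :|: [set e in s]) ->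
  odd (eps_aux phi H0 s) = odd (J phi H0) (+) odd (J phi (H0 :|: [set e in s])).
Proof.
elim: s => [|[u w] s IH] H0 /=.
  by move=> _ _ _; rewrite setU_nil addbb.
move=> us nin m; have [nc us' nin' m'] := tele_pre us nin m.
rewrite setU_cons !oddD (IH _ us' nin' m') (key phi_inj nc).
by case: (odd (J phi H0)); case: (odd (J phi _)); case: (odd (J phi _)).
Qed.

Lemma eps_J (H : {set V' * V'}) : mp H -> odd (eps phi H) = odd (J phi set0) (+) odd (J phi H).
Proof.
move=> m; have e : set0 :|: [set x in enum H] = H.
  by apply/setP => x; rewrite !inE mem_enum.
rewrite /eps tele ?e ?enum_uniq //.
by move=> x _; rewrite inE.
Qed.

End Tele.

Lemma tele_comp (V1 V2 V3 : finType) (phi : V1 -> V2) (psi : V2 -> V3) :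
  injective phi -> injective psi ->
  forall s (H0 : {set V1 * V1}), uniq s -> {in s, forall e, e \notin H0} ->
  mp (H0 :|: [set e in s]) ->
  odd (eps_aux (psi \o phi) H0 s) =
  odd (eps_aux phi H0 s) (+) odd (J psi (img_edges phi H0)) (+)
  odd (J psi (img_edges phi (H0 :|: [set e in s]))).
Proof.
move=> pi si; elim => [|[u w] s IH] H0 /=.
  by move=> _ _ _; rewrite setU_nil; case: (odd (J psi _)).
move=> us nin m; have [nc us' nin' m'] := tele_pre us nin m.
rewrite setU_cons !oddD (IH _ us' nin' m').
have nc' : ~~ cls (img_edges phi H0) (phi u) (phi w) by rewrite cls_img.
have := key si nc'.
have -> : img_edges phi ((u, w) |: H0) = (phi u, phi w) |: img_edges phi H0.
  by rewrite /img_edges imsetU1.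
rewrite img_comp.
move: (odd (sigma H0 (u, w))) (odd (sigma (img_edges phi H0) (phi u, phi w)))
  (odd (sigma (img_edges psi (img_edges phi H0)) (psi (phi u), psi (phi w))))
  (odd (eps_aux phi ((u, w) |: H0) s)) (odd (J psi (img_edges phi H0)))
  (odd (J psi ((phi u, phi w) |: img_edges phi H0)))
  (odd (J psi (img_edges phi ((u, w) |: H0 :|: [set x in s])))) => a b c d x y z.
by case: a; case: b; case: c; case: d; case: x; case: y; case: z.
Qed.

Lemma imsetD1_inj (aT rT : finType) (f : aT -> rT) (A : {set aT}) x :
  injective f -> f @: (A :\ x) = f @: A :\ f x.
Proof.
move=> fi; apply/setP => y; rewrite in_setD1; apply/imsetP/andP.
  case=> z; rewrite in_setD1 => /andP[zx zA] ->; split; last exact: imset_f.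
  by rewrite (inj_eq fi).
case=> yx /imsetP [z zA ey]; exists z => //; rewrite in_setD1 zA andbT.
by apply: contra yx => /eqP ez; rewrite ey ez.
Qed.

Lemma sign_eq (R : comPzRingType) (a b : nat) : odd a = odd b -> (-1) ^+ a = (-1) ^+ b :> R.
Proof. by move=> e; rewrite -signr_odd e signr_odd. Qed.

Section Chain.
Variables (G' G : digraph) (R : comPzRingType) (phi : vtx G' -> vtx G).
Hypothesis reg : regular phi.

Lemma mp_of (G0 : digraph) (H : {set vtx G0 * vtx G0}) : is_multipath H -> mp H.
Proof. by rewrite is_mpE => /andP[]. Qed.

Lemma is_mpD1 (G0 : digraph) (H : {set vtx G0 * vtx G0}) e : is_multipath H -> is_multipath (H :\ e).
Proof.
rewrite !is_mpE => /andP[s m]; have sub : H :\ e \subset H by apply: subsetDl.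
by rewrite (subset_trans sub s) (mp_sub sub m).
Qed.

Lemma pullc_mdiff (y : cochain G R) : mdiff (pullc phi y) = pullc phi (mdiff y).
Proof.
have pi := reg.1.
apply/ffunP => H'; rewrite !ffunE; case: (boolP (is_multipath H')) => hm //.
rewrite (is_mp_img reg hm) /img_edges (big_imset _ (in2W (pmap_inj pi))) /= mulr_sumr.
apply: eq_bigr => -[u w] eH; rewrite ffunE (is_mpD1 _ hm).
rewrite -(imsetD1_inj _ _ (pmap_inj pi)) -/(img_edges phi (H' :\ (u, w))) /=.
rewrite !mulrA; congr (_ * _); rewrite -!exprD; apply: sign_eq.
have m := mp_of hm; have md := mp_of (is_mpD1 (u, w) hm).
have eH' : (u, w) |: (H' :\ (u, w)) = H' by rewrite setD1K.
have nc : ~~ cls (H' :\ (u, w)) u w.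
  apply: mp_nocls; first by rewrite eH'.
  by rewrite in_setD1 eqxx.
have k := key pi nc; rewrite eH' in k.
rewrite !oddD (eps_J pi m) (eps_J pi md).
move: k; rewrite /pmap /=.
move: (odd (sigma _ _)) (odd (sigma _ _)) (odd (J phi set0)) (odd (J phi H')) (odd (J phi (H' :\ (u, w)))) => a b c d e.
by case: a; case: b; case: c; case: d; case: e.
Qed.

End Chain.

Lemma mapc_mdiff (G : digraph) (R S : comPzRingType) (f : {rmorphism R -> S}) (x : cochain G R) :
  mapc f (mdiff x) = mdiff (mapc f x).
Proof.
apply/ffunP => H; rewrite !ffunE; case: ifP => _; last exact: rmorph0.
rewrite rmorph_sum; apply: eq_bigr => e _; by rewrite rmorphMsign ffunE.
Qed.

Lemma mdiff0 (G : digraph) (R : comPzRingType) : mdiff (0 : cochain G R) = 0.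
Proof.
apply/ffunP => H; rewrite !ffunE; case: ifP => // _; apply: big1 => e _; by rewrite ffunE mulr0.
Qed.

Lemma bimap0 (G' G : digraph) (R S : comPzRingType) (phi : vtx G' -> vtx G) (f : {rmorphism R -> S}) :
  bimap phi f (0 : cochain G R) = 0.
Proof. apply/ffunP => H; rewrite !ffunE; case: ifP => // _; by rewrite ?ffunE rmorph0 mulr0. Qed.

Lemma bimapD (G' G : digraph) (R S : comPzRingType) (phi : vtx G' -> vtx G) (f : {rmorphism R -> S})
  (x y : cochain G R) : bimap phi f (x + y) = bimap phi f x + bimap phi f y.
Proof.
apply/ffunP => H; rewrite !ffunE; case: ifP => _; last by rewrite addr0.
by rewrite ?ffunE rmorphD mulrDr.
Qed.

Lemma bimap_mdiff (G' G : digraph) (R S : comPzRingType) (phi : vtx G' -> vtx G) (f : {rmorphism R -> S})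
  (x : cochain G R) : regular phi -> bimap phi f (mdiff x) = mdiff (bimap phi f x).
Proof. by move=> reg; rewrite /bimap mapc_mdiff pullc_mdiff. Qed.

Lemma bimap_deg (G' G : digraph) (R S : comPzRingType) (phi : vtx G' -> vtx G) (f : {rmorphism R -> S})
  (x : cochain G R) n : regular phi -> in_degree n x -> in_degree n (bimap phi f x).
Proof.
move=> reg dx H; rewrite !ffunE; case: ifP => //= hm /eqP hn.
rewrite ?ffunE dx ?rmorph0 ?mulr0 // (is_mp_img reg hm) /=.
rewrite /img_edges card_imset; first exact/eqP.
case: reg => pi _; by move=> [a b] [c d] [/pi -> /pi ->].
Qed.

Lemma coboundary0 (G : digraph) (R : comPzRingType) n : coboundary n (0 : cochain G R).
Proof. case: n => [|m] //=; exists 0; [by move=> H; rewrite ffunE | by rewrite mdiff0]. Qed.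

Lemma eps_id (V : finType) s (H0 : {set V * V}) : odd (eps_aux id H0 s) = false.
Proof.
elim: s H0 => [|[u w] s IH] H0 //=.
have -> : img_edges id H0 = H0.
  by rewrite /img_edges -[RHS]imset_id; apply: eq_imset => -[].
by rewrite !oddD IH addbb.
Qed.

Lemma img_id (V : finType) (H : {set V * V}) : img_edges id H = H.
Proof. by rewrite /img_edges -[RHS]imset_id; apply: eq_imset => -[]. Qed.

Theorem theorem1p3 :
  (forall (G' G : digraph) (R S : comPzRingType) (phi : vtx G' -> vtx G)
          (f : {rmorphism R -> S}) (n : nat),
     regular phi ->
     (forall x : cochain G R, cocycle n x -> cocycle n (bimap phi f x)) /\
     (forall x : cochain G R, coboundary n x -> coboundary n (bimap phi f x)) /\
     (forall x y : cochain G R,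
        bimap phi f (x + y) = bimap phi f x + bimap phi f y)) /\
  (forall (G : digraph) (R : comPzRingType) (n : nat) (x : cochain G R),
     cocycle n x -> cohom_eq n (bimap (@id (vtx G)) (@id R) x) x) /\
  (forall (G1 G2 G3 : digraph) (R S T : comPzRingType)
          (phi : vtx G1 -> vtx G2) (psi : vtx G2 -> vtx G3)
          (f : {rmorphism R -> S}) (g : {rmorphism S -> T})
          (n : nat) (x : cochain G3 R),
     regular phi -> regular psi -> cocycle n x ->
     cohom_eq n (bimap (psi \o phi) (g \o f) x) (bimap phi g (bimap psi f x))).
Proof.
split; [|split].
- move=> G' G R S phi f n reg; split; [|split].
  + move=> x [dx mx]; split; first exact: bimap_deg.
    by rewrite -bimap_mdiff // mx bimap0.
  + move=> x; case: n => [|m] /=; first by move=> ->; rewrite bimap0.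
    case=> y dy ->; exists (bimap phi f y); first exact: bimap_deg.
    exact: bimap_mdiff.
  + exact: bimapD.
- move=> G R n x [dx _].
  have -> : bimap id id x = x.
    apply/ffunP => H; rewrite !ffunE; case: ifP => hm.
      by rewrite /eps -signr_odd eps_id expr0 mul1r img_id.
    by rewrite dx // hm.
  by rewrite /cohom_eq subrr; apply: coboundary0.
move=> G1 G2 G3 R S T phi psi f g n x rphi rpsi _.
have -> : bimap (psi \o phi) (g \o f) x = bimap phi g (bimap psi f x).
  apply/ffunP => H; rewrite !ffunE; case: ifP => hm //.
  rewrite ?ffunE (is_mp_img rphi hm) ?ffunE rmorphMsign mulrA -exprD /=.
  rewrite img_comp; congr (_ * _); apply: sign_eq.
  have m := mp_of hm.
  have pi := rphi.1; have si := rpsi.1.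
  have e : set0 :|: [set x in enum H] = H by apply/setP => y; rewrite !inE mem_enum.
  rewrite oddD (eps_J si (mp_img pi m)) /eps (tele_comp pi si) ?enum_uniq ?e //.
    rewrite /img_edges imset0.
    by case: (odd (eps_aux _ _ _)); case: (odd (J psi _)); case: (odd (J psi _)).
  by move=> y _; rewrite inE.
by rewrite /cohom_eq subrr; apply: coboundary0.
Qed.
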